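(* For every graph $G=(V,E)$, every edge ordering, and every integer $f\ge 1$, the output $H$ of the algorithm $\mathsf{FTGreedyMFDCertificate}(G,f)$ is an $f$-MFD connectivity certificate of $G$.
   Context: For $F\subseteq V\cup E$, $G-F$ is obtained by deleting the vertices of $F\cap V$ (with incident edges) and the edges of $F\cap E$; $F$ damages an edge $e$ if $e$ is not an edge of $G-F$. For $v\in V$ let $\deg_G(v,F)=|\{u\in N_G(v): u\in F\text{ or }\{u,v\}\in F\}|$ and $\deg_G(F)=\max_{v\in V\setminus F}\deg_G(v,F)$. The algorithm $\mathsf{FTGreedyMFDCertificate}(G,f)$, given the edges ordered $e_1,\dots,e_m$ with $e_i=\{u_i,v_i\}$: start with $H=(V,\emptyset)$; for $i=1,\dots,m$, if there exists $F\subseteq V\cup E$ with $\deg_G(F)\le f$ that does not damage $e_i$ such that $u_i$ and $v_i$ are disconnected in $H-F$, add $e_i$ to $H$; return $H$. A subgraph $H\subseteq G$ is an $f$-MFD connectivity certificate of $G$ if for every $F\subseteq V\cup E$ with $\deg_G(F)\le f$, $G-F$ and $H-F$ have the same connected components. *)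

(* Defs.v *)
From mathcomp Require Import all_boot.
Set Implicit Arguments. Unset Strict Implicit. Unset Printing Implicit Defensive.

Section FT.
Variable V : finType.

(* An edge
   ordering is a sequence of ordered pairs (u_i, v_i) with e_i = {u_i, v_i}. *)
Definition edg (p : V * V) : {set V} := [set p.1; p.2].

Definition simple_graph (E : {set {set V}}) : Prop :=
  forall e, e \in E -> #|e| = 2.

Definition edge_ordering (E : {set {set V}}) (es : seq (V * V)) : Prop :=
  uniq (map edg es) /\ [set edg p | p in es] = E.

(* A fault set F ⊆ V ∪ E is a pair (FV, FE) with FV ⊆ V and FE ⊆ E. *)

Definition nbr (E : {set {set V}}) (v : V) : {set V} := [set u | [set u; v] \in E].

Definition degF (E : {set {set V}}) (FV : {set V}) (FE : {set {set V}}) (v : V) : nat :=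
  #|[set u in nbr E v | (u \in FV) || ([set u; v] \in FE)]|.

Definition admissible (E : {set {set V}}) (f : nat) (FV : {set V}) (FE : {set {set V}}) : bool :=
  (FE \subset E) && [forall v, (v \notin FV) ==> (degF E FV FE v <= f)].

Definition adjF (H : {set {set V}}) (FV : {set V}) (FE : {set {set V}}) : rel V :=
  fun x y => [&& x \notin FV, y \notin FV, [set x; y] \in H & [set x; y] \notin FE].

Definition damages (FV : {set V}) (FE : {set {set V}}) (p : V * V) : bool :=
  [|| p.1 \in FV, p.2 \in FV | edg p \in FE].

Definition ftstep (E : {set {set V}}) (f : nat) (H : {set {set V}}) (p : V * V)
  : {set {set V}} :=
  if [exists FV : {set V}, exists FE : {set {set V}},
        [&& admissible E f FV FE, ~~ damages FV FE p &
            ~~ connect (adjF H FV FE) p.1 p.2]]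
  then edg p |: H else H.

Definition FTGreedyMFDCertificate (E : {set {set V}}) (f : nat) (es : seq (V * V))
  : {set {set V}} :=
  foldl (ftstep E f) set0 es.

Definition MFD_certificate (E : {set {set V}}) (f : nat) (H : {set {set V}}) : Prop :=
  H \subset E /\
  forall (FV : {set V}) (FE : {set {set V}}), admissible E f FV FE ->
    forall u v, u \notin FV -> v \notin FV ->
      connect (adjF E FV FE) u v = connect (adjF H FV FE) u v.

End FT.

(* Main.v *)
Require Import Defs.
From mathcomp Require Import all_boot.

Lemma adjF_sym (V : finType) (H : {set {set V}}) FV FE : symmetric (adjF H FV FE).
Proof.
move=> x y; rewrite /adjF setUC; by case: (x \in FV); case: (y \in FV).
Qed.

Lemma adjF_mono (V : finType) (H H' : {set {set V}}) FV FE :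
  H \subset H' -> forall x y, connect (adjF H FV FE) x y -> connect (adjF H' FV FE) x y.
Proof.
move=> sHH'; apply: connect_sub => x y /and4P [a b c d].
apply: connect1; rewrite /adjF a b d (subsetP sHH' _ c); done.
Qed.

Lemma fold_sub (V : finType) (E : {set {set V}}) f s (H : {set {set V}}) :
  H \subset foldl (ftstep E f) H s.
Proof.
elim: s H => [|p s IH] H /=; first exact: subxx.
apply: subset_trans (IH _); rewrite /ftstep; case: ifP => _; [exact: subsetUr|exact: subxx].
Qed.


Lemma fold_inE (V : finType) (E : {set {set V}}) f s (H : {set {set V}}) :
  H \subset E -> (forall p, p \in s -> edg p \in E) ->
  foldl (ftstep E f) H s \subset E.
Proof.
elim: s H => [|p s IH] H //= HE sE; apply: IH => [|q qs]; last by apply: sE; rewrite inE qs orbT.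
rewrite /ftstep; case: ifP => _ //; rewrite subUset sub1set HE andbT; apply: sE; exact: mem_head.
Qed.

Lemma fold_conn (V : finType) (E : {set {set V}}) f s (H : {set {set V}}) FV FE :
  admissible E f FV FE -> forall p, p \in s -> ~~ damages FV FE p ->
  connect (adjF (foldl (ftstep E f) H s) FV FE) p.1 p.2.
Proof.
move=> adm; elim: s H => [|q s IH] H p //= ps nd.
move: ps; rewrite inE => /orP [/eqP epq | ps]; last exact: IH. subst p.
have hm := @adjF_mono V _ _ FV FE (@fold_sub V E f s (ftstep E f H q)) q.1 q.2; apply: hm.
move: nd; rewrite /damages !negb_or => /and3P [a b c].
rewrite /ftstep; case: ifP => [_ | /negbT ne].
  apply: connect1; rewrite /adjF a b c setU11 //.
apply: negbNE; apply: contra ne => nc; apply/existsP; exists FV; apply/existsP; exists FE.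
by rewrite adm /damages !negb_or a b c nc.
Qed.

Theorem mainTheorem5 (V : finType) (E : {set {set V}}) (es : seq (V * V)) (f : nat) :
  simple_graph E -> edge_ordering E es -> 1 <= f ->
  MFD_certificate E f (FTGreedyMFDCertificate E f es).
Proof.
move=> _ [_ hE] _.
have sE : forall p, p \in es -> edg p \in E by move=> p ps; rewrite -hE; apply/imsetP; exists p.
have HE : FTGreedyMFDCertificate E f es \subset E by apply: fold_inE => //; exact: sub0set.
split => // FV FE adm u v _ _.
apply/idP/idP; last exact: adjF_mono.
move: u v; apply: connect_sub => x y /and4P [a b c d].
have /imsetP [p ps ep] : [set x; y] \in [set edg p | p in es] by rewrite hE.
have hp : connect (adjF (FTGreedyMFDCertificate E f es) FV FE) p.1 p.2.
  apply: fold_conn => //; rewrite /damages -ep (negbTE d) orbF.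
  have h1 : p.1 \in [set x; y] by rewrite ep /edg !inE eqxx.
  have h2 : p.2 \in [set x; y] by rewrite ep /edg !inE eqxx orbT.
  rewrite negb_or; apply/andP; split.
    by move: h1; rewrite !inE => /orP [] /eqP ->.
  by move: h2; rewrite !inE => /orP [] /eqP ->.
have sym := sym_connect_sym (@adjF_sym V (FTGreedyMFDCertificate E f es) FV FE).
have : x \in edg p by rewrite -ep !inE eqxx.
have : y \in edg p by rewrite -ep !inE eqxx orbT.
rewrite /edg !inE => /orP [] /eqP -> /orP [] /eqP -> //; by rewrite sym.
Qed.
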